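(* Let $T=((\Omega,\mathcal{A}),\{(\Omega,\mathcal{M}_i)\}_{i\in N},\{t_i\}_{i\in N})$ be a type space. The players' beliefs in $T$ are consistent if and only if $\bigcap_{i\in N}\Pi_i\ne\emptyset$.
   Context: A field on a set $X$ is a collection of subsets of $X$ containing $X$ and closed under complements and finite intersections. For a field $\mathcal{A}$ on $\Omega$, $\mathrm{pba}(\Omega,\mathcal{A})$ is the set of finitely additive nonnegative $P:\mathcal{A}\to\mathbb{R}$ with $P(\Omega)=1$; $B(\Omega,\mathcal{A})$ the sup-norm closure of the linear span of indicators of sets in $\mathcal{A}$; bounded finitely additive set functions carry the weak* topology (weakest making $\mu\mapsto\int f\,d\mu$ continuous for all $f\in B(\Omega,\mathcal{A})$), $\overline{\,\cdot\,}^\ast$ denotes weak* closure. A type space: $N$ a nonempty (possibly infinite) set of players, fields $\mathcal{M}_i\subseteq\mathcal{A}$ on a set $\Omega$, $t_i:\Omega\times\mathcal{A}\to[0,1]$ with $t_i(\omega,\cdot)\in\mathrm{pba}(\Omega,\mathcal{A})$, $t_i(\cdot,E)\in B(\Omega,\mathcal{M}_i)$ for $E\in\mathcal{A}$, and $t_i(\omega,E)=1$ whenever $E\in\mathcal{M}_i$, $\omega\in E$. $\Pi_i=\overline{\mathrm{conv}\{t_i(\omega,\cdot):\omega\in\Omega\}}^\ast$ (equivalently the $P\in\mathrm{pba}(\Omega,\mathcal{A})$ with $P(E\cap F)=\int_F t_i(\cdot,E)\,dP$ for all $E\in\mathcal{A},F\in\mathcal{M}_i$). The players' beliefs are consistent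 if $\bigcap_{i\in I}\Pi_i\ne\emptyset$ for every finite $I\subseteq N$. *)

(* Defs.v *)
From mathcomp Require Import all_boot all_order all_algebra.
From mathcomp Require Import boolp classical_sets cardinality reals.
From Stdlib Require List.
Set Implicit Arguments. Unset Strict Implicit. Unset Printing Implicit Defensive.
Import Order.TTheory GRing.Theory Num.Theory.
Local Open Scope classical_set_scope.
Local Open Scope ring_scope.

Section TypeSpaces.
Variables (R : realType) (Omega : Type).

Definition is_field (F : set (set Omega)) : Prop :=
  F setT /\ (forall E, F E -> F (~` E)) /\ (forall E G, F E -> F G -> F (E `&` G)).

Definition ind (E : set Omega) (x : Omega) : R := if `[< E x >] then 1 else 0.

(* A finite linear combination of indicators of sets in F, given by a list of
   (coefficient, set) pairs. *)
Definition simple_in (F : set (set Omega)) (s : seq (R * set Omega)) : Prop :=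
  forall p, List.In p s -> F p.2.

Definition simple_eval (s : seq (R * set Omega)) (x : Omega) : R :=
  \sum_(p <- s) p.1 * ind p.2 x.

(* B(Omega, F): sup-norm closure of the linear span of indicators of sets in F. *)
Definition in_B (F : set (set Omega)) (f : Omega -> R) : Prop :=
  forall eps : R, 0 < eps -> exists s, simple_in F s /\
    forall x, `|f x - simple_eval s x| <= eps.

Definition fin_additive (A : set (set Omega)) (mu : set Omega -> R) : Prop :=
  forall E G, A E -> A G -> E `&` G = set0 -> mu (E `|` G) = mu E + mu G.

Definition ba (A : set (set Omega)) (mu : set Omega -> R) : Prop :=
  fin_additive A mu /\ exists m : R, forall E, A E -> `|mu E| <= m.

Definition pba (A : set (set Omega)) (P : set Omega -> R) : Prop :=
  fin_additive A P /\ (forall E, A E -> 0 <= P E) /\ P setT = 1.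

Definition simple_int (mu : set Omega -> R) (s : seq (R * set Omega)) : R :=
  \sum_(p <- s) p.1 * mu p.2.

Definition is_integral (A : set (set Omega)) (mu : set Omega -> R)
    (f : Omega -> R) (r : R) : Prop :=
  forall eps : R, 0 < eps -> exists delta : R, 0 < delta /\
    forall s, simple_in A s -> (forall x, `|f x - simple_eval s x| < delta) ->
      `|simple_int mu s - r| < eps.

Definition integral (A : set (set Omega)) (mu : set Omega -> R)
    (f : Omega -> R) : R := xget 0 [set r | is_integral A mu f r].

(* weak* closure (in the space of bounded finitely additive set functions) of a
   set S: every basic weak* neighbourhood of mu meets S (neighbourhoods given by finitely many f in B(Omega,A) and eps>0). *)
Definition weak_star_closure (A : set (set Omega)) (S : set (set Omega -> R))
    (mu : set Omega -> R) : Prop :=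
  ba A mu /\
  forall (fs : seq (Omega -> R)) (eps : R), (forall f, List.In f fs -> in_B A f) ->
    0 < eps -> exists nu, S nu /\
      forall f, List.In f fs -> `|integral A mu f - integral A nu f| < eps.

Definition conv_hull (S : set (set Omega -> R)) : set (set Omega -> R) :=
  [set mu | exists l : seq (R * (set Omega -> R)),
     (forall p, List.In p l -> 0 <= p.1 /\ S p.2) /\
     \sum_(p <- l) p.1 = 1 /\
     forall E, mu E = \sum_(p <- l) p.1 * p.2 E].

Variable N : Type.

Definition type_space (A : set (set Omega)) (M : N -> set (set Omega))
    (t : N -> Omega -> set Omega -> R) : Prop :=
  is_field A /\
  (forall i, is_field (M i) /\ M i `<=` A) /\
  (forall i w E, A E -> 0 <= t i w E <= 1) /\
  (forall i w, pba A (t i w)) /\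
  (forall i E, A E -> in_B (M i) (fun w => t i w E)) /\
  (forall i E w, M i E -> E w -> t i w E = 1).

Definition Pi (A : set (set Omega)) (t : N -> Omega -> set Omega -> R) (i : N) :
  set (set Omega -> R) :=
  weak_star_closure A (conv_hull [set t i w | w in setT]).

Definition consistent (A : set (set Omega)) (t : N -> Omega -> set Omega -> R) : Prop :=
  forall I : set N, finite_set I -> exists mu, forall i, I i -> Pi A t i mu.

End TypeSpaces.

(* Main.v *)
Require Import Defs.
From mathcomp Require Import all_boot all_order all_algebra.
From mathcomp Require Import boolp classical_sets cardinality reals filter.
From mathcomp Require Import ring lra.
Set Implicit Arguments. Unset Strict Implicit. Unset Printing Implicit Defensive.
Import Order.TTheory GRing.Theory Num.Theory.
Local Open Scope classical_set_scope.
Local Open Scope ring_scope.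

Section Basic.
Variable R : realType.

Lemma normleP (x y : R) : `|x| <= y <-> (-y <= x /\ x <= y).
Proof. by rewrite ler_norml; split => [/andP|[-> ->]]. Qed.

Lemma normltP (x y : R) : `|x| < y <-> (-y < x /\ x < y).
Proof. by rewrite ltr_norml; split => [/andP|[-> ->]]. Qed.

Lemma eq_eps (x y : R) : (forall e, 0 < e -> `|x - y| < e) -> x = y.
Proof.
move=> h; apply/eqP; rewrite -subr_eq0 -normr_eq0; apply/negPn/negP => hn.
have hp : 0 < `|x - y| by rewrite lt0r hn normr_ge0.
by have := h _ hp; rewrite ltxx.
Qed.

Lemma ge0_eps (x : R) : (forall e, 0 < e -> exists z, 0 <= z /\ `|x - z| < e) -> 0 <= x.
Proof.
move=> h; rewrite leNgt; apply/negP => hx.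
have hp : 0 < - x by rewrite oppr_gt0.
have [z [hz /normltP [h1 h2]]] := h _ hp; lra.
Qed.
End Basic.

Section Integ.
Variables (R : realType) (Omega : Type) (A : set (set Omega)).
Hypothesis HA : is_field A.

Lemma fieldT : A setT. Proof. by case: HA. Qed.
Lemma fieldC E : A E -> A (~` E). Proof. by case: HA => _ []; auto. Qed.
Lemma fieldI E G : A E -> A G -> A (E `&` G). Proof. by case: HA => _ []; auto. Qed.
Lemma field0 : A set0. Proof. by rewrite -setCT; apply: fieldC; apply: fieldT. Qed.
Lemma fieldU E G : A E -> A G -> A (E `|` G).
Proof.
move=> hE hG; rewrite -[E `|` G]setCK setCU; apply: fieldC.
by apply: fieldI; apply: fieldC.
Qed.

Lemma simple_in_tail (a : R * set Omega) (s : seq (R * set Omega)) : simple_in A (a :: s) -> simple_in A s.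
Proof. by move=> h p hp; apply: h; right. Qed.
Lemma simple_in_head (a : R * set Omega) (s : seq (R * set Omega)) : simple_in A (a :: s) -> A a.2.
Proof. by move=> h; apply: h; left. Qed.

Lemma simple_eval_cons (a : R) (F : set Omega) (s : seq (R * set Omega)) (x : Omega) :
  simple_eval ((a, F) :: s) x = a * ind R F x + simple_eval s x.
Proof. by rewrite /simple_eval big_cons. Qed.
Lemma simple_int_cons (mu : set Omega -> R) (a : R) (F : set Omega) (s : seq (R * set Omega)) :
  simple_int mu ((a, F) :: s) = a * mu F + simple_int mu s.
Proof. by rewrite /simple_int big_cons. Qed.
Lemma simple_eval_nil x : simple_eval (R:=R) (Omega:=Omega) [::] x = 0.
Proof. by rewrite /simple_eval big_nil. Qed.
Lemma simple_int_nil (mu : set Omega -> R) : simple_int mu [::] = 0.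
Proof. by rewrite /simple_int big_nil. Qed.

Lemma ind_in (F : set Omega) (x : Omega) : F x -> ind R F x = 1.
Proof. by move=> h; rewrite /ind asboolT. Qed.
Lemma ind_out (F : set Omega) (x : Omega) : ~ F x -> ind R F x = 0.
Proof. by move=> h; rewrite /ind asboolF. Qed.

Lemma disjI (X E : set Omega) : (X `&` E) `&` (X `&` ~` E) = set0.
Proof. by rewrite -subset0 => x [[_ h1] [_ h2]]. Qed.

Variable mu : set Omega -> R.
Hypothesis Hadd : fin_additive A mu.

Lemma mu0 : mu set0 = 0.
Proof.
have := Hadd field0 field0 (setI0 _); rewrite setU0 => h; lra.
Qed.

Lemma musplit (X E : set Omega) : A X -> A E -> mu X = mu (X `&` E) + mu (X `&` ~` E).
Proof.
move=> hX hE; rewrite -Hadd; first by rewrite -setIUr setUCr setIT.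
- exact: fieldI.
- by apply: fieldI => //; apply: fieldC.
- exact: disjI.
Qed.

Definition Tsum (G : set Omega) (s : seq (R * set Omega)) :=
  \sum_(p <- s) p.1 * mu (p.2 `&` G).

Lemma Tsplit (s : seq (R * set Omega)) (G E : set Omega) : simple_in A s -> A G -> A E ->
  Tsum G s = Tsum (G `&` E) s + Tsum (G `&` ~` E) s.
Proof.
move=> hs hG hE; elim: s hs => [|[a F] s IH] hs.
  by rewrite /Tsum !big_nil addr0.
move: (IH (simple_in_tail hs)); rewrite /Tsum !big_cons /= => ->.
have hF := simple_in_head hs.
rewrite (musplit (X := F `&` G) (E := E)); last by [].
  by rewrite !setIA; ring.
exact: fieldI.
Qed.

Lemma Tbound (s : seq (R * set Omega)) : simple_in A s -> forall c, 0 <= c -> forall G a, A G ->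
  (forall x, G x -> `|a + simple_eval s x| <= c) ->
  exists P Q, A P /\ A Q /\ P `<=` G /\ Q `<=` G /\
    `|a * mu G + Tsum G s| <= c * (mu P - mu Q).
Proof.
elim: s => [|[a1 F] s IH] hs c hc G a hG hb.
  have -> : Tsum G [::] = 0 by rewrite /Tsum big_nil.
  rewrite addr0.
  have [[x Gx]|nG] := pselect (exists x, G x).
    have ha : `|a| <= c by have := hb x Gx; rewrite simple_eval_nil addr0.
    have [hm|hm] := leP 0 (mu G).
      exists G, set0; split=> //; split; first exact: field0.
      split=> //; split=> //.
      rewrite mu0 subr0 normrM (ger0_norm hm); exact: ler_wpM2r.
    exists set0, G; split; first exact: field0.
    split=> //; split=> //; split=> //.
    rewrite mu0 sub0r normrM (ltr0_norm hm); apply: ler_wpM2r => //.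
    by rewrite oppr_ge0 ltW.
  have -> : G = set0 by rewrite -subset0 => x Gx; apply: nG; exists x.
  exists set0, set0; split; first exact: field0.
  split; first exact: field0.
  split=> //; split=> //.
  by rewrite mu0 mulr0 normr0 subrr mulr0.
have hF := simple_in_head hs; have hs' := simple_in_tail hs.
have hGF : A (G `&` F) by apply: fieldI.
have hGnF : A (G `&` ~` F) by apply: fieldI => //; apply: fieldC.
have [P1 [Q1 [hP1 [hQ1 [sP1 [sQ1 b1]]]]]] := IH hs' c hc (G `&` F) (a + a1) hGF
  (fun x hx => ltac:(have := hb x (proj1 hx); rewrite simple_eval_cons (ind_in (proj2 hx)) mulr1 addrA; exact)).
have [P2 [Q2 [hP2 [hQ2 [sP2 [sQ2 b2]]]]]] := IH hs' c hc (G `&` ~` F) a hGnF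
  (fun x hx => ltac:(have := hb x (proj1 hx); rewrite simple_eval_cons (ind_out (proj2 hx)) mulr0 add0r; exact)).
have dP : P1 `&` P2 = set0.
  by rewrite -subset0 => x [/sP1 [_ h1] /sP2 [_ h2]].
have dQ : Q1 `&` Q2 = set0.
  by rewrite -subset0 => x [/sQ1 [_ h1] /sQ2 [_ h2]].
exists (P1 `|` P2), (Q1 `|` Q2); split; first exact: fieldU.
split; first exact: fieldU.
split; first by move=> x [/sP1 []|/sP2 []].
split; first by move=> x [/sQ1 []|/sQ2 []].
rewrite (Hadd hP1 hP2 dP) (Hadd hQ1 hQ2 dQ).
have -> : a * mu G + Tsum G ((a1, F) :: s) =
  ((a + a1) * mu (G `&` F) + Tsum (G `&` F) s) +
  (a * mu (G `&` ~` F) + Tsum (G `&` ~` F) s).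
  rewrite /Tsum big_cons /= -/(Tsum G s) (Tsplit hs' hG hF) /Tsum.
  rewrite (musplit hG hF) [F `&` G]setIC; ring.
apply: le_trans (ler_normD _ _) _.
have := lerD b1 b2; rewrite -!mulrDr => h; apply: le_trans h _.
by rewrite le_eqVlt; apply/orP; left; apply/eqP; congr (_ * _); ring.
Qed.

Variable m : R.
Hypothesis Hm : forall E, A E -> `|mu E| <= m.

Lemma m_ge0 : 0 <= m.
Proof. exact: le_trans (normr_ge0 _) (Hm fieldT). Qed.

Lemma sbound (s : seq (R * set Omega)) (c : R) : simple_in A s -> 0 <= c -> (forall x, `|simple_eval s x| <= c) ->
  `|simple_int mu s| <= 2 * m * c.
Proof.
move=> hs hc hb.
have [P [Q [hP [hQ [_ [_ b]]]]]] := Tbound hs hc (a:=0) fieldT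
  (fun x _ => ltac:(rewrite add0r; exact: hb)).
have e : simple_int mu s = Tsum setT s.
  by rewrite /Tsum /simple_int; apply: eq_bigr => p _; rewrite setIT.
rewrite e; move: b; rewrite mul0r add0r => b; apply: le_trans b _.
have h1 : mu P - mu Q <= m + m.
  have := Hm hP; have := Hm hQ; rewrite !ler_norml => /andP [? ?] /andP [? ?]; lra.
have := ler_wpM2l hc h1 => h2; lra.
Qed.

Definition sneg (s : seq (R * set Omega)) := map (fun p => (- p.1, p.2)) s.

Lemma simple_eval_diff (s1 s2 : seq (R * set Omega)) (x : Omega) :
  simple_eval (s1 ++ sneg s2) x = simple_eval s1 x - simple_eval s2 x.
Proof.
rewrite /simple_eval big_cat big_map /= -sumrN; congr (_ + _).
by apply: eq_bigr => p _; rewrite mulNr.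
Qed.

Lemma simple_int_diff (nu : set Omega -> R) (s1 s2 : seq (R * set Omega)) :
  simple_int nu (s1 ++ sneg s2) = simple_int nu s1 - simple_int nu s2.
Proof.
rewrite /simple_int big_cat big_map /= -sumrN; congr (_ + _).
by apply: eq_bigr => p _; rewrite mulNr.
Qed.

Lemma simple_in_diff (s1 s2 : seq (R * set Omega)) : simple_in A s1 -> simple_in A s2 ->
  simple_in A (s1 ++ sneg s2).
Proof.
move=> h1 h2 p hp; case: (List.in_app_or _ _ _ hp) => [/h1 //|hq].
have [q [<- hq']] := proj1 (List.in_map_iff (fun p : R * set Omega => (- p.1, p.2)) s2 p) hq.
exact: (h2 q hq').
Qed.

Lemma sdiff_bound (s1 s2 : seq (R * set Omega)) (c : R) : simple_in A s1 -> simple_in A s2 -> 0 <= c ->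
  (forall x, `|simple_eval s1 x - simple_eval s2 x| <= c) ->
  `|simple_int mu s1 - simple_int mu s2| <= 2 * m * c.
Proof.
move=> h1 h2 hc hb; rewrite -simple_int_diff; apply: sbound => //.
  exact: simple_in_diff.
by move=> x; rewrite simple_eval_diff.
Qed.

Lemma int_exists (f : Omega -> R) : in_B A f -> exists r, is_integral A mu f r /\
  forall s e, simple_in A s -> 0 <= e -> (forall x, `|f x - simple_eval s x| <= e) ->
    `|simple_int mu s - r| <= 2 * m * e.
Proof.
move=> hf.
have key : forall s e s' e', simple_in A s -> 0 <= e ->
    (forall x, `|f x - simple_eval s x| <= e) ->
    simple_in A s' -> 0 <= e' -> (forall x, `|f x - simple_eval s' x| <= e') ->
    `|simple_int mu s - simple_int mu s'| <= 2 * m * (e + e').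
  move=> s e s' e' hs he hb hs' he' hb'; apply: sdiff_bound => //.
    exact: addr_ge0.
  move=> x; have := hb x; have := hb' x; rewrite !ler_norml.
  by move=> /andP [? ?] /andP [? ?]; apply/andP; split; lra.
pose L := [set y | exists s e, simple_in A s /\ 0 <= e /\
  (forall x, `|f x - simple_eval s x| <= e) /\ y = simple_int mu s - 2 * m * e].
have [s0 [hs0 hb0]] := hf 1 ltr01.
have hL : has_sup L.
  split; first by exists (simple_int mu s0 - 2 * m * 1); exists s0, 1.
  exists (simple_int mu s0 + 2 * m * 1) => y [s [e [hs [he [hb ->]]]]].
  have := key _ _ _ _ hs he hb hs0 ler01 hb0; rewrite ler_norml => /andP [? ?].
  have := m_ge0 => ?; lra.
have hm := m_ge0.
have approx : forall s e, simple_in A s -> 0 <= e ->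
    (forall x, `|f x - simple_eval s x| <= e) ->
    `|simple_int mu s - sup L| <= 2 * m * e.
  move=> s e hs he hb; rewrite ler_norml; apply/andP; split.
    have : sup L <= simple_int mu s + 2 * m * e.
      apply: ge_sup; first by case: hL.
      move=> y [s' [e' [hs' [he' [hb' ->]]]]].
      have := key _ _ _ _ hs he hb hs' he' hb'; rewrite ler_norml => /andP [? ?].
      lra.
    lra.
  have : simple_int mu s - 2 * m * e <= sup L.
    by apply: sup_upper_bound => //; exists s, e.
  lra.
exists (sup L); split => // eps heps.
have hpos : 0 < 2 * m + 1 by lra.
exists (eps / (2 * m + 1)); split; first exact: divr_gt0.
move=> s hs hb.
have e1 : (2 * m + 1) * (eps / (2 * m + 1)) = eps.
  by rewrite mulrC divfK // gt_eqF.
have hd : 0 < eps / (2 * m + 1) by exact: divr_gt0.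
have := approx s (eps / (2 * m + 1)) hs (ltW hd) (fun x => ltW (hb x)).
move=> h; apply: le_lt_trans h _; lra.
Qed.

Lemma int_unique (f : Omega -> R) (r r' : R) : in_B A f -> is_integral A mu f r -> is_integral A mu f r' -> r = r'.
Proof.
move=> hf h1 h2; apply: eq_eps => eps heps.
have he2 : 0 < eps / 2 by exact: divr_gt0.
have [d1 [hd1 k1]] := h1 _ he2; have [d2 [hd2 k2]] := h2 _ he2.
have hmin : 0 < Num.min d1 d2 by rewrite lt_min hd1 hd2.
have hm1 : Num.min d1 d2 <= d1 by rewrite ge_min lexx.
have hm2 : Num.min d1 d2 <= d2 by rewrite ge_min lexx orbT.
have hd : 0 < Num.min d1 d2 / 2 by exact: divr_gt0.
have [s [hs hb]] := hf _ hd.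
have hlt : forall x, `|f x - simple_eval s x| < Num.min d1 d2.
  move=> x; apply: le_lt_trans (hb x) _; lra.
have := k1 s hs (fun x => lt_le_trans (hlt x) hm1).
have := k2 s hs (fun x => lt_le_trans (hlt x) hm2).
rewrite !ltr_norml => /andP [? ?] /andP [? ?]; apply/andP; split; lra.
Qed.

Lemma int_approx (f : Omega -> R) (s : seq (R * set Omega)) (e : R) : in_B A f -> simple_in A s -> 0 <= e ->
  (forall x, `|f x - simple_eval s x| <= e) ->
  `|integral A mu f - simple_int mu s| <= 2 * m * e.
Proof.
move=> hf hs he hb; have [r [hr hap]] := int_exists hf.
have -> : integral A mu f = r.
  by apply: xget_unique => // y hy; exact: int_unique hy hr.
by rewrite distrC; apply: hap.
Qed.

End Integ.
Section Meas.
Variables (R : realType) (Omega : Type) (A : set (set Omega)).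
Hypothesis HA : is_field A.

Lemma pba_bound (P : set Omega -> R) : pba A P -> forall E, A E -> `|P E| <= 1.
Proof.
move=> [hadd [hpos h1]] E hE.
have := musplit HA hadd (fieldT HA) hE; rewrite !setTI h1 => e.
have := hpos _ (fieldC HA hE); have := hpos _ hE => ? ?.
rewrite ler_norml; apply/andP; split; lra.
Qed.

Lemma ind_B (E : set Omega) : A E -> in_B A (ind R E).
Proof.
move=> hE eps heps; exists [:: (1, E)]; split.
  by move=> p [<-|[]].
by move=> x; rewrite simple_eval_cons simple_eval_nil mul1r addr0 subrr normr0 ltW.
Qed.

Lemma integral_ind (mu : set Omega -> R) m : fin_additive A mu ->
  (forall E, A E -> `|mu E| <= m) -> forall E, A E -> integral A mu (ind R E) = mu E.
Proof.
move=> hadd hm E hE.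
have hs : simple_in A [:: (1 : R, E)] by move=> p [<-|[]].
have := int_approx HA hadd hm (ind_B hE) hs (lexx 0)
  (fun x => ltac:(by rewrite simple_eval_cons simple_eval_nil mul1r addr0 subrr normr0)).
rewrite mulr0 simple_int_cons simple_int_nil mul1r addr0 normr_le0 subr_eq0.
by move/eqP.
Qed.

Lemma conv_pba (S : set (set Omega -> R)) nu :
  (forall x, S x -> pba A x) -> conv_hull S nu -> pba A nu.
Proof.
move=> hS [l [hl [h1 hnu]]].
have hl' : forall p, List.In p l -> 0 <= p.1 /\ pba A p.2.
  by move=> p /hl [? ?]; split => //; apply: hS.
split; [|split].
- move=> E G hE hG hEG; rewrite !hnu.
  move: hl'; clear hnu hl h1; elim: l => [|p l IH] hl'; first by rewrite !big_nil addr0.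
  rewrite !big_cons IH; last by move=> q hq; apply: hl'; right.
  have [_ [hadd _]] := hl' p (or_introl erefl).
  rewrite (hadd _ _ hE hG hEG); ring.
- move=> E hE; rewrite hnu.
  move: hl'; clear hnu hl h1; elim: l => [|p l IH] hl'; first by rewrite big_nil.
  rewrite big_cons; apply: addr_ge0; last by apply: IH => q hq; apply: hl'; right.
  have [? [_ [hpos _]]] := hl' p (or_introl erefl).
  by apply: mulr_ge0 => //; apply: hpos.
- rewrite hnu -h1.
  move: hl'; clear hnu hl h1; elim: l => [|p l IH] hl'; first by rewrite !big_nil.
  rewrite !big_cons IH; last by move=> q hq; apply: hl'; right.
  have [_ [_ [_ ->]]] := hl' p (or_introl erefl).
  by rewrite mulr1.
Qed.

Lemma wsc_pba (S : set (set Omega -> R)) mu :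
  (forall nu, S nu -> pba A nu) -> weak_star_closure A S mu -> pba A mu.
Proof.
move=> hS [[hadd [m hm]] hcl].
have close : forall E, A E -> forall eps, 0 < eps ->
    exists nu, S nu /\ `|mu E - nu E| < eps.
  move=> E hE eps heps.
  have [nu [hnu hf]] := hcl [:: ind R E] eps (fun f hf => ltac:(case: hf => [<-|[]]; exact: ind_B)) heps.
  exists nu; split => //.
  have hnp := hS _ hnu.
  have := hf _ (or_introl erefl).
  by rewrite (integral_ind hadd hm hE) (integral_ind hnp.1 (pba_bound hnp) hE).
split; [exact: hadd|split].
- move=> E hE; apply: ge0_eps => eps heps.
  have [nu [hnu h]] := close E hE eps heps.
  by exists (nu E); split => //; exact: (hS _ hnu).2.1.
- apply: eq_eps => eps heps.
  have [nu [hnu h]] := close _ (fieldT HA) eps heps.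
  by move: h; rewrite (hS _ hnu).2.2.
Qed.
End Meas.

Section Ultra.
Variables (R : realType) (T : Type) (U : set_system T).
Hypothesis HU : UltraFilter U.

Definition ulim (h : T -> R) := sup [set r | U [set I | r <= h I]].

Lemma ulimP h : U [set I | 0 <= h I <= 1] ->
  forall eps, 0 < eps -> U [set I | `|h I - ulim h| < eps].
Proof.
move=> hb eps heps.
set S := [set r | U [set I | r <= h I]].
have hS : has_sup S.
  split.
    exists 0; apply: filterS hb => I /andP [].
    by [].
  exists 1 => r hr; rewrite leNgt; apply/negP => r1.
  have [I [h1 /andP [_ h2]]] := filter_ex (filterI hr hb).
  move: h1 h2 r1 => /= h1 h2 r1; lra.
have [r hr hlt] := sup_adherent heps hS.
have low : U [set I | ulim h - eps < h I].
  by apply: filterS hr => I /= hI; rewrite /ulim -/S; lra.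
have up : U [set I | h I < ulim h + eps].
  case: (in_ultra_setVsetC [set I | h I < ulim h + eps] HU) => [//|hc].
  exfalso.
  have hs : S (ulim h + eps).
    apply: filterS hc => I /= hI; rewrite leNgt; apply/negP => hh; exact: hI.
  have := sup_upper_bound hS hs; rewrite /ulim -/S => hh; lra.
apply: filterS (filterI low up) => I [/= h1 h2].
rewrite ltr_norml; apply/andP; split; lra.
Qed.
End Ultra.

Unset Implicit Arguments.
Local Close Scope ring_scope.

Theorem lemma3 (R : realType) (N Omega : Type) (A : set (set Omega))
    (M : N -> set (set Omega)) (t : N -> Omega -> set Omega -> R) :
  inhabited N -> type_space A M t ->
  consistent A t <-> (exists mu, forall i : N, Pi A t i mu).
Proof.
Local Open Scope ring_scope.
move=> [i0] hts; split; last first.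
  by move=> [mu hmu] I _; exists mu => i _; exact: hmu.
move=> hcons.
case: hts => HA [_ [_ [htp _]]].
have PiP : forall i mu, Pi A t i mu -> pba A mu.
  move=> i mu; apply: wsc_pba => // nu; apply: conv_pba => // x [w _ <-].
  exact: htp.
have exg : forall I : set N, exists mu : set Omega -> R,
    finite_set I -> forall i, I i -> Pi A t i mu.
  move=> I; case: (pselect (finite_set I)) => hI.
    by have [mu h] := hcons I hI; exists mu.
  by exists (fun _ => 0).
pose g I := projT1 (cid (exg I)).
have gP : forall I, finite_set I -> forall i, I i -> Pi A t i (g I).
  by move=> I; exact: (projT2 (cid (exg I))).
pose F0 : set_system (set N) := fun X => exists J, finite_set J /\
  forall I, finite_set I -> J `<=` I -> X I.
have F0P : ProperFilter F0.
  apply: Build_ProperFilter_ex.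
    by move=> X [J [hJ hX]]; exists J; exact: hX.
  split.
  - by exists set0; split; first exact: finite_set0.
  - move=> X Y [J1 [h1 hX]] [J2 [h2 hY]]; exists (J1 `|` J2); split.
      by rewrite finite_setU.
    move=> I hI sI; split; [apply: hX | apply: hY] => // x hx; apply: sI;
      [left|right] => //.
  - move=> X Y sXY [J [hJ hX]]; exists J; split => // I hI sI; apply: sXY.
    exact: hX.
have [U [HU sFU]] := ultraFilterLemma F0P.
have PU : ProperFilter U by case: HU.
have FU : Filter U by case: PU.
have Ui : forall i, U [set I | Pi A t i (g I)].
  move=> i; apply: sFU; exists [set i]; split; first exact: finite_set1.
  by move=> I hI sI; apply: gP => //; apply: sI.
pose mu E := ulim U (fun I => g I E).
have close : forall E, A E -> forall eps, 0 < eps ->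
    U [set I | `|g I E - mu E| < eps].
  move=> E hE eps heps; apply: ulimP => //; apply: filterS (Ui i0) => I /PiP hp.
  have := pba_bound HA hp hE; have := hp.2.1 E hE.
  by rewrite ler_norml => h0 /andP [_ h1]; apply/andP; split.
have mupba : pba A mu.
  split; [|split].
  - move=> E G hE hG hEG; apply: eq_eps => eps heps.
    have he3 : 0 < eps / 3 by apply: divr_gt0.
    have [I [hI [h1 [h2 h3]]]] := filter_ex (filterI (Ui i0) (filterI (close _ (fieldU HA hE hG) _ he3)
      (filterI (close _ hE _ he3) (close _ hG _ he3)))).
    have hadd := (PiP _ _ hI).1 E G hE hG hEG.
    move: h1 h2 h3 => /=; rewrite hadd !ltr_norml => /andP[? ?] /andP[? ?] /andP[? ?].
    apply/andP; split; lra.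
  - move=> E hE; apply: ge0_eps => eps heps.
    have [I [hI h1]] := filter_ex (filterI (Ui i0) (close _ hE _ heps)).
    exists (g I E); split; first exact: (PiP _ _ hI).2.1 E hE.
    by rewrite distrC.
  - apply: eq_eps => eps heps.
    have [I [hI h1]] := filter_ex (filterI (Ui i0) (close _ (fieldT HA) _ heps)).
    by move: h1 => /=; rewrite (PiP _ _ hI).2.2 distrC.
have Uint : forall s, simple_in A s -> forall e, 0 < e ->
    U [set I | `|simple_int (g I) s - simple_int mu s| < e].
  elim => [|[a E] s IH] hs e he.
    by apply: filterS filterT => I _ /=; rewrite !simple_int_nil subrr normr0.
  have hE := simple_in_head hs.
  have ha : 0 < `|a| + 1 by have := normr_ge0 a; lra.
  pose d := e / (2 * (`|a| + 1)).
  have hd : 0 < d by apply: divr_gt0 => //; lra.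
  have he2 : 0 < e / 2 by apply: divr_gt0.
  apply: filterS (filterI (close _ hE _ hd) (IH (simple_in_tail hs) _ he2)) => I [/= h1 h2]; rewrite !simple_int_cons.
  have ed : (`|a| + 1) * d = e / 2.
    by rewrite /d; field; exact: lt0r_neq0.
  have h3 : `|a * (g I E - mu E)| <= e / 2.
    rewrite normrM; apply: le_trans (ler_wpM2l (normr_ge0 a) (ltW h1)) _.
    have := normr_ge0 a; lra.
  move: h2 h3; rewrite ltr_norml ler_norml => /andP[? ?] /andP[? ?].
  rewrite ltr_norml; apply/andP; split; lra.
have Ufs : forall i fs, (forall f, List.In f fs -> in_B A f) -> forall e, 0 < e ->
    U [set I | Pi A t i (g I) /\ forall f, List.In f fs ->
      `|integral A mu f - integral A (g I) f| < e].
  move=> i; elim => [|f fs IH] hfs e he.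
    by apply: filterS (Ui i) => I hI; split => // f [].
  have hf := hfs f (or_introl erefl).
  have he6 : 0 < e / 6 by apply: divr_gt0.
  have [s [hs hb]] := hf _ he6.
  apply: filterS (filterI (IH (fun f h => hfs f (or_intror h)) e he) (Uint s hs _ he6)) => I [[hI hall] /= h2]; split => // f' [<-|hf']; last exact: hall.
  have a1 := int_approx HA mupba.1 (pba_bound HA mupba) hf hs (ltW he6) hb.
  have gp := PiP _ _ hI.
  have a2 := int_approx HA gp.1 (pba_bound HA gp) hf hs (ltW he6) hb.
  move: a1 a2 h2; rewrite !ler_norml ltr_norml => /andP[? ?] /andP[? ?] /andP[? ?].
  rewrite ltr_norml; apply/andP; split; lra.
exists mu => i; split.
  split; first exact: mupba.1.
  by exists 1%R => E hE; exact: (pba_bound HA mupba hE).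
move=> fs eps hfs heps.
have he2 : 0 < eps / 2 by apply: divr_gt0.
have [I [hI hall]] := filter_ex (Ufs i fs hfs _ he2).
have [nu [hnu hnf]] := hI.2 fs (eps / 2) hfs he2.
exists nu; split => // f hf.
move: (hall f hf) (hnf f hf); rewrite !ltr_norml => /andP[? ?] /andP[? ?].
apply/andP; split; lra.
Qed.
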